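(* Let $e\geq 2$, $N$ cyclic of order $2^e$, and let $G$ be a non-regular transitive subgroup of $\mathrm{Hol}(N)$. Then $|Z(G)|\cdot|[G,G]|=2^e$.
   Context: $\mathrm{Hol}(N)=N\rtimes\mathrm{Aut}(N)$ acts on $N$ by $(\eta,\alpha)\cdot x=\eta\,\alpha(x)$; a subgroup is transitive if it acts transitively on $N$, and regular if moreover the stabiliser of $1_N$ is trivial. $Z(G)$ is the centre and $[G,G]$ the commutator subgroup of $G$. *)

(* Defs.v *)
From mathcomp Require Import all_boot all_order all_fingroup all_solvable.
Set Implicit Arguments. Unset Strict Implicit. Unset Printing Implicit Defensive.
Local Open Scope group_scope.

(* The group N is the whole finite group type gT (N := [set: gT]).
   Hol(N) = N ⋊ Aut(N) is realised through its (faithful) action on N: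
   the permutation x |-> eta * alpha x of N, for eta in N, alpha in Aut(N). *)
Definition holomorph (gT : finGroupType) : {set {perm gT}} :=
  [set p : {perm gT} | [exists eta : gT,
     [exists alpha in Aut [set: gT], [forall x : gT, p x == eta * alpha x]]]].

Definition hol_transitive (gT : finGroupType) (G : {set {perm gT}}) : bool :=
  [transitive G, on [set: gT] | 'P].

Definition hol_regular (gT : finGroupType) (G : {set {perm gT}}) : bool :=
  hol_transitive G && ('C_G[1 | 'P] == 1).

(* Main.v *)
Require Import Defs.
From mathcomp Require Import all_boot all_order all_fingroup all_solvable.
From mathcomp Require Import all_algebra.
From mathcomp Require Import ring zify.
Set Implicit Arguments. Unset Strict Implicit. Unset Printing Implicit Defensive.
Import GRing.Theory.

Section Ring.
Variable e : nat.
Hypothesis e1 : 0 < e.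
Local Notation R := 'Z_(2 ^ e).
Local Open Scope ring_scope.

Lemma n_gt1 : (1 < 2 ^ e)%N.
Proof. by rewrite -{1}(expn0 2) ltn_exp2l. Qed.

Lemma valR (m : nat) : val (m%:R : R) = (m %% 2 ^ e)%N.
Proof. exact: val_Zp_nat n_gt1 m. Qed.

Lemma two_e0 : (2%:R : R) ^+ e = 0.
Proof. by rewrite -natrX; apply: val_inj; rewrite /= valR modnn. Qed.

Lemma two_pow_neq0 s : (s < e)%N -> (2%:R : R) ^+ s != 0.
Proof.
move=> se; rewrite -natrX; apply/eqP => /(congr1 val); rewrite /= valR modn_small.
  by move/eqP; rewrite expn_eq0.
by rewrite ltn_exp2l.
Qed.

Lemma R1 s (u : R) : (s < e)%N -> u \is a GRing.unit -> (2%:R : R) ^+ s * u != 0.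
Proof.
move=> se uu; apply/eqP => h; move: (two_pow_neq0 se); rewrite -[_ ^+ s](mulrK uu) h.
by rewrite mul0r eqxx.
Qed.

Lemma parity (x : R) : (exists y, x = 2%:R * y) \/ (exists y, x = 1 + 2%:R * y).
Proof.
rewrite -[x]natr_Zp -(odd_double_half (val x)) -muln2 natrD natrM.
case: (odd _); [right|left]; exists (val x)./2%:R; rewrite /=; ring.
Qed.

Lemma not_even1 : ~ exists y : R, 1 = 2%:R * y.
Proof.
case=> y h; have := @two_pow_neq0 e.-1; rewrite ltn_predL e1 => /(_ isT).
have h0 : (2%:R : R) ^+ e.-1 * 2%:R = 0 by rewrite -exprSr prednK // two_e0.
move=> ne; have : (2%:R : R) ^+ e.-1 = 2%:R ^+ e.-1 * 2%:R * y by rewrite -mulrA -h mulr1.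
by rewrite h0 mul0r; apply/eqP.
Qed.

Lemma unit_odd (u : R) : u \is a GRing.unit -> exists w, u = 1 + 2%:R * w.
Proof.
move=> uu; case: (parity u) => // -[y hy]; case: not_even1.
exists (y * u^-1); by rewrite mulrA -hy mulrV.
Qed.

Lemma odd_unit (w : R) : (1 + 2%:R * w) \is a GRing.unit.
Proof.
have -> : 1 + 2%:R * w = (1 + 2 * val w)%N%:R :> R by rewrite natrD natrM natr_Zp.
rewrite unitZpE ?n_gt1 // coprime_pexpl //.
by rewrite coprime2n oddD oddM.
Qed.

Lemma decomp (x : R) : x != 0 ->
  exists s, exists2 u, u \is a GRing.unit & ((s < e)%N /\ x = 2%:R ^+ s * u).
Proof.
move=> x0; have vx : (0 < val x)%N.
  by rewrite lt0n; apply: contra x0 => /eqP h; apply/eqP; apply: val_inj.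
have [m cm em] := pfactor_coprime (isT : prime 2) vx.
have um : (m%:R : R) \is a GRing.unit by rewrite unitZpE ?n_gt1 // coprime_pexpl.
have ex : x = 2%:R ^+ logn 2 (val x) * m%:R by rewrite -natrX -natrM mulnC -em natr_Zp.
exists (logn 2 (val x)), m%:R => //; split => //.
rewrite ltnNge; apply/negP => le; move/eqP: x0; apply; rewrite ex.
have -> : (2%:R : R) ^+ logn 2 (val x) = 2%:R ^+ (logn 2 (val x) - e) * 2%:R ^+ e.
  by rewrite -exprD subnK.
by rewrite two_e0 mulr0 mul0r.
Qed.

Definition dvb k (x : R) := [exists y, x == 2%:R ^+ k * y].

Lemma dvbP k x : reflect (exists y, x = 2%:R ^+ k * y) (dvb k x).
Proof. by apply: (iffP existsP) => -[y /eqP h]; exists y. Qed.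

Lemma dvb_le j k x : (j <= k)%N -> dvb k x -> dvb j x.
Proof.
move=> jk /dvbP [y ->]; apply/dvbP; exists (2%:R ^+ (k - j) * y).
by rewrite mulrA -exprD subnKC.
Qed.

Lemma dvb0 k : dvb k 0.
Proof. by apply/dvbP; exists 0; rewrite mulr0. Qed.

Lemma dvbD k x y : dvb k x -> dvb k y -> dvb k (x + y).
Proof. by move=> /dvbP [a ->] /dvbP [b ->]; apply/dvbP; exists (a + b); rewrite mulrDr. Qed.

Lemma dvbN k x : dvb k x -> dvb k (- x).
Proof. by move=> /dvbP [a ->]; apply/dvbP; exists (- a); rewrite mulrN. Qed.

Lemma dvbMl k x y : dvb k x -> dvb k (y * x).
Proof. by move=> /dvbP [a ->]; apply/dvbP; exists (y * a); rewrite mulrCA. Qed.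

Lemma card_dvb k : (k <= e)%N -> (#|[set x : R | dvb k x]| <= 2 ^ (e - k))%N.
Proof.
move=> ke.
pose F := fun r : 'I_(2 ^ (e - k)) => (2%:R ^+ k * (val r)%:R : R).
apply: leq_trans (_ : #|[set F r | r : 'I_(2 ^ (e - k))]| <= _)%N; last first.
  by rewrite (leq_trans (leq_imset_card _ _)) // card_ord.
apply: subset_leq_card; apply/subsetP => x; rewrite inE => /dvbP [y ->].
have hm : (0 < 2 ^ (e - k))%N by rewrite expn_gt0.
apply/imsetP; exists (Ordinal (ltn_pmod (val y) hm)) => //.
rewrite /F /= -[y in LHS]natr_Zp {1}(divn_eq (val y) (2 ^ (e - k))) natrD natrM.
rewrite mulrDr natrX mulrCA -exprD subnKC // two_e0 mulr0 add0r.
by [].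
Qed.

Lemma ann l (x : R) : (l <= e)%N -> 2%:R ^+ l * x = 0 -> dvb (e - l) x.
Proof.
move=> le h; have [->|x0] := eqVneq x 0.
  by apply/dvbP; exists 0; rewrite mulr0.
have [s [u uu [se ex]]] := decomp x0; move: h; rewrite ex mulrA -exprD.
case: (ltnP (l + s) e) => [lt|ge]; first by move/eqP; rewrite (negPf (R1 lt uu)).
move=> _; apply/dvbP; exists (2%:R ^+ (s - (e - l)) * u).
by rewrite mulrA -exprD subnKC // leq_subLR.
Qed.
Fixpoint geo (a : R) k := if k is k'.+1 then 1 + a * geo a k' else 0.

Lemma geoD a j k : geo a (j + k) = geo a j + a ^+ j * geo a k.
Proof.
elim: j => [|j IH] /=; first by rewrite add0r mul1r.
by rewrite IH exprS; ring.
Qed.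

Lemma geo1 k : geo 1 k = k%:R.
Proof. by elim: k => [|k IH] //=; rewrite IH mul1r -natr1 addrC. Qed.

Lemma pow4 (a t : R) : a = 1 + 2%:R ^+ 2 * t ->
  forall j, exists t', a ^+ (2 ^ j) = 1 + 2%:R ^+ 2 * t'.
Proof.
move=> ha; elim=> [|j [t' IH]]; first by exists t; rewrite expr1.
exists (2%:R * t' + 2%:R ^+ 2 * t' ^+ 2).
by rewrite expnS mulnC exprM IH; ring.
Qed.

Lemma geo2 (a t : R) : a = 1 + 2%:R ^+ 2 * t ->
  forall j, exists2 u, u \is a GRing.unit & geo a (2 ^ j) = 2%:R ^+ j * u.
Proof.
move=> ha; elim=> [|j [u uu IH]]; first by exists 1; [exact: unitr1 | rewrite /= mulr0 addr0 mulr1].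
have [t' ht] := pow4 ha j.
exists ((1 + 2%:R * t') * u); first by rewrite unitrM uu odd_unit.
rewrite expnS mul2n -addnn geoD IH ht [in RHS]exprS; ring.
Qed.

Lemma minval (X : {set R}) x1 : x1 \in X -> x1 != 0 ->
  exists l, exists2 x0, x0 \in X & exists2 u, u \is a GRing.unit &
    [/\ (l < e)%N, x0 = 2%:R ^+ l * u & forall x, x \in X -> dvb l x].
Proof.
move=> x1X x10.
pose P k := [exists x in X, exists u, (u \is a GRing.unit) && (x == 2%:R ^+ k * u)].
have exP : exists k, P k.
  have [s [u uu [_ ex]]] := decomp x10.
  by exists s; apply/existsP; exists x1; rewrite x1X; apply/existsP; exists u; rewrite uu ex eqxx.
case: (ex_minnP exP) => l /existsP [x0 /andP [x0X /existsP [u /andP [uu /eqP ex0]]]] minl.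
exists l, x0 => //; exists u => //; split => //.
  have [s [u' uu' [se ex]]] := decomp x10.
  apply: leq_ltn_trans se; apply: minl; apply/existsP; exists x1; rewrite x1X.
  by apply/existsP; exists u'; rewrite uu' ex eqxx.
move=> x xX; have [->|x0n] := eqVneq x 0; first by apply/dvbP; exists 0; rewrite mulr0.
have [s [u' uu' [se ex]]] := decomp x0n.
have ls : (l <= s)%N.
  apply: minl; apply/existsP; exists x; rewrite xX.
  by apply/existsP; exists u'; rewrite uu' ex eqxx.
by apply: (dvb_le ls); apply/dvbP; exists u'.
Qed.
End Ring.


Section Aff.
Variables (e : nat) (gT : finGroupType) (z : gT).
Hypotheses (e1 : (0 < e)%N) (genz : [set: gT] = <[z]>%g) (oz : #[z]%g = (2 ^ e)%N).
Local Notation R := 'Z_(2 ^ e).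
Local Open Scope ring_scope.

Definition ez (x : R) : gT := (z ^+ x)%g.

Lemma ez_nat m : ez m%:R = (z ^+ m)%g.
Proof. by rewrite /ez valR // -oz expg_mod_order. Qed.

Lemma ezD x y : ez (x + y) = (ez x * ez y)%g.
Proof. by rewrite -[x]natr_Zp -[y]natr_Zp -natrD !ez_nat expgD. Qed.

Lemma ezM x y : ez (x * y) = (ez y ^+ x)%g.
Proof. by rewrite -[x]natr_Zp -[y]natr_Zp -natrM !ez_nat natr_Zp mulnC expgM. Qed.

Lemma ez0 : ez 0 = 1%g.
Proof. by rewrite /ez /= expg0. Qed.

Lemma ez1 : ez 1 = z.
Proof. by rewrite -[1]/(1%:R) ez_nat expg1. Qed.

Lemma ltR (x : R) : (val x < 2 ^ e)%N.
Proof.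
have h : (Zp_trunc (2 ^ e)).+2 = (2 ^ e)%N := Zp_cast (n_gt1 e1).
suff : (nat_of_ord x < 2 ^ e)%N by [].
by rewrite -[X in (_ < X)%N]h; exact: ltn_ord.
Qed.

Lemma ez_inj : injective ez.
Proof.
move=> x y /eqP; rewrite /ez eq_expg_mod_order oz !modn_small ?ltR // => /eqP h.
exact: val_inj.
Qed.

Lemma ez_surj g : exists x, g = ez x.
Proof.
have : g \in <[z]>%g by rewrite -genz inE.
case/cyclePmin => i _ ->; exists i%:R; by rewrite ez_nat.
Qed.

Definition affP (p : {perm gT}) (ba : R * R) :=
  [forall x : R, p (ez x) == ez (ba.1 + ba.2 * x)].
Definition aff p := [exists ba, affP p ba].
Definition bapair p := odflt (0, 0) [pick ba | affP p ba].
Definition bb p := (bapair p).1.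
Definition aa p := (bapair p).2.

Lemma affE (p : {perm gT}) : aff p -> forall x, p (ez x) = ez (bb p + aa p * x).
Proof.
rewrite /aff /bb /aa /bapair; case: pickP => [ba /forallP h _ x|].
  by apply/eqP; apply: h.
by move=> h /existsP [ba]; rewrite h.
Qed.

Lemma affU (p : {perm gT}) b a : (forall x, p (ez x) = ez (b + a * x)) -> [/\ aff p, bb p = b & aa p = a].
Proof.
move=> h; have ap : aff p by apply/existsP; exists (b, a); apply/forallP => x; rewrite h.
have h2 := affE ap.
have eb : bb p = b by apply: ez_inj; move: (h2 0) (h 0); rewrite !mulr0 !addr0 => <-.
split => //; apply: ez_inj; move: (h2 1) (h 1); rewrite eb !mulr1 => -> /ez_inj h3.
by move/addrI: h3 => ->.
Qed.

Lemma aff_eq (p q : {perm gT}) : aff p -> aff q -> bb p = bb q -> aa p = aa q -> p = q.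
Proof.
move=> ap aq eb ea; apply/permP => g; have [x ->] := ez_surj g.
by rewrite (affE ap) (affE aq) eb ea.
Qed.

Lemma affM (p q : {perm gT}) : aff p -> aff q ->
  [/\ aff (p * q)%g, bb (p * q)%g = bb q + aa q * bb p & aa (p * q)%g = aa q * aa p].
Proof.
move=> ap aq; apply: affU => x; rewrite permM (affE ap) (affE aq).
congr ez; ring.
Qed.

Lemma aff1 : [/\ aff 1%g, bb 1%g = 0 & aa 1%g = 1].
Proof. by apply: affU => x; rewrite perm1 add0r mul1r. Qed.

Lemma hol_aff p : p \in holomorph gT -> aff p.
Proof.
rewrite inE => /existsP [eta /existsP [al /andP [Aal /forallP h]]].
have [be hbe] := ez_surj eta; have [k hk] := ez_surj (al z).
apply/existsP; exists (be, k); apply/forallP => x /=; rewrite (eqP (h _)).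
have -> : al (ez x) = ez (k * x).
  have mM := morphicP (Aut_morphic Aal).
  have aX : forall m, al (z ^+ m)%g = (al z ^+ m)%g.
    elim=> [|m IH]; last by rewrite !expgS mM ?inE // IH.
    rewrite !expg0; apply: (mulgI (al 1%g)); by rewrite -mM ?inE // !mulg1.
  by rewrite mulrC ezM -hk /ez aX.
by rewrite ezD hbe.
Qed.
End Aff.


Section Main.
Variables (e : nat) (gT : finGroupType) (z : gT).
Hypotheses (e1 : (0 < e)%N) (genz : [set: gT] = <[z]>%g) (oz : #[z]%g = (2 ^ e)%N).
Variable G : {group {perm gT}}.
Hypotheses (GH : G \subset holomorph gT).
Local Notation R := 'Z_(2 ^ e).
Local Open Scope ring_scope.
Local Notation ez := (@ez e gT z).
Local Notation bb := (@bb e gT z).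
Local Notation aa := (@aa e gT z).

Lemma affG p : p \in G -> aff e z p.
Proof. by move=> pG; apply: (hol_aff e1 genz oz); apply: (subsetP GH). Qed.

Lemma bbM p q : p \in G -> q \in G -> bb (p * q)%g = bb q + aa q * bb p.
Proof. by move=> pG qG; case: (affM e1 oz (affG pG) (affG qG)). Qed.

Lemma aaM p q : p \in G -> q \in G -> aa (p * q)%g = aa q * aa p.
Proof. by move=> pG qG; case: (affM e1 oz (affG pG) (affG qG)). Qed.

Lemma bb1 : bb 1%g = 0.
Proof. by case: (aff1 e1 oz). Qed.

Lemma aa1 : aa 1%g = 1.
Proof. by case: (aff1 e1 oz). Qed.

Lemma eqG p q : p \in G -> q \in G -> bb p = bb q -> aa p = aa q -> p = q.
Proof. by move=> pG qG; apply: (aff_eq e1 genz oz); apply: affG. Qed.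

Lemma is1 p : p \in G -> bb p = 0 -> aa p = 1 -> p = 1%g.
Proof. by move=> pG hb ha; apply: eqG; rewrite ?group1 ?bb1 ?aa1. Qed.

Lemma unitG p : p \in G -> aa p \is a GRing.unit.
Proof.
move=> pG; have := aaM pG (groupVr pG); rewrite mulgV aa1 => h.
by apply/unitrPr; exists (aa p^-1%g); rewrite mulrC.
Qed.

Definition tt p q := (aa q - 1) * bb p - (aa p - 1) * bb q.

Lemma commP p q : p \in G -> q \in G -> commute p q <-> tt p q = 0.
Proof.
move=> pG qG; have ht : tt p q = bb (p * q)%g - bb (q * p)%g.
  by rewrite !bbM // /tt; ring.
split => [h|h]; first by rewrite ht h subrr.
apply: eqG; rewrite ?groupM //; first by apply/eqP; rewrite -subr_eq0 -ht h.
by rewrite !aaM // mulrC.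
Qed.

Lemma commR p q : p \in G -> q \in G ->
  bb [~ p, q]%g = tt p q /\ aa [~ p, q]%g = 1.
Proof.
move=> pG qG; have rG : ([~ p, q] \in G)%g by rewrite groupR.
have hC := commgC p q.
have ha : aa [~ p, q]%g = 1.
  have h := congr1 aa hC.
  rewrite (aaM (groupM qG pG) rG) (aaM qG pG) (aaM pG qG) in h.
  have u : aa p * aa q \is a GRing.unit by rewrite unitrM !unitG.
  by apply: (mulIr u); rewrite mul1r -h mulrC.
split => //; have h := congr1 bb hC.
rewrite (bbM (groupM qG pG) rG) ha mul1r (bbM qG pG) (bbM pG qG) /tt in h *.
by rewrite -[bb _](addrK (bb p + aa p * bb q)) -h; ring.
Qed.

Lemma powG g k : g \in G -> bb (g ^+ k)%g = bb g * geo (aa g) k /\ aa (g ^+ k)%g = aa g ^+ k.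
Proof.
move=> gG; elim: k => [|k [IHb IHa]]; first by rewrite expg0 bb1 aa1 /= mulr0.
rewrite expgSr bbM ?aaM ?groupX // IHb IHa exprS /=; split => //; ring.
Qed.


Lemma bbfix p : p \in G -> p 1%g = ez (bb p).
Proof. by move=> pG; rewrite -(@ez0 e gT z) (affE (affG pG)) mulr0 addr0. Qed.

Lemma invG p : p \in G -> bb p^-1%g = - aa p^-1%g * bb p.
Proof.
move=> pG; have := bbM pG (groupVr pG); rewrite mulgV bb1 => /esym/eqP.
by rewrite addr_eq0 => /eqP ->; rewrite mulNr.
Qed.

Lemma conjG h g : h \in G -> g \in G ->
  bb (h ^ g)%g = bb g + aa g * bb h - aa h * bb g /\ aa (h ^ g)%g = aa h.
Proof.
move=> hG gG; have kG : (h ^ g \in G)%g by rewrite groupJ.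
have hc := conjgC h g.
have ea : aa (h ^ g)%g = aa h.
  have := congr1 aa hc; rewrite (aaM hG gG) (aaM gG kG) => h1.
  by apply: (mulIr (unitG gG)); rewrite -h1 mulrC.
split => //; have := congr1 bb hc; rewrite (bbM hG gG) (bbM gG kG) ea => ->.
by rewrite addrK.
Qed.

End Main.

Lemma order2 (hT : finGroupType) (x : hT) k : (0 < k)%N ->
  (x ^+ (2 ^ k))%g = 1%g -> (x ^+ (2 ^ k.-1))%g != 1%g -> #[x]%g = (2 ^ k)%N.
Proof.
move=> k0 h1 h2; have : (#[x]%g %| 2 ^ k)%N by rewrite order_dvdn h1.
case/dvdn_pfactor => // i ik hi; rewrite hi; congr (_ ^ _)%N.
apply/eqP; rewrite eqn_leq ik /= leqNgt; apply/negP => ik1.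
move: h2; rewrite -order_dvdn hi dvdn_exp2l //.
by rewrite -ltnS prednK.
Qed.


Lemma A1 e l sv : (sv <= e - l)%N -> (l <= e)%N -> (e - l - sv + l = e - sv)%N.
Proof. lia. Qed.
Lemma A2 e l sv : (sv <= e - l)%N -> (0 < l)%N -> (l <= e)%N -> (e - l - sv + l.-1 = e.-1 - sv)%N.
Proof. lia. Qed.
Lemma A3 e l sv : (sv <= e - l)%N -> (0 < l)%N -> (l <= e)%N -> (sv <= e.-1)%N.
Proof. lia. Qed.

Section Thm.
Variables (e : nat) (gT : finGroupType) (z : gT).
Hypotheses (e1 : (0 < e)%N) (genz : [set: gT] = <[z]>%g) (oz : #[z]%g = (2 ^ e)%N).
Variable G : {group {perm gT}}.
Hypotheses (GH : G \subset holomorph gT) (trG : hol_transitive G) (nrG : ~~ hol_regular G).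
Local Notation R := 'Z_(2 ^ e).
Local Open Scope ring_scope.
Local Notation ez := (@ez e gT z).
Local Notation bb := (@bb e gT z).
Local Notation aa := (@aa e gT z).
Local Notation tt := (@tt e gT z).
Local Notation bbM := (bbM e1 genz oz GH).
Local Notation aaM := (aaM e1 genz oz GH).
Local Notation commP := (commP e1 genz oz GH).
Local Notation commR := (commR e1 genz oz GH).
Local Notation powG := (powG e1 genz oz GH).
Local Notation conjG := (conjG e1 genz oz GH).
Local Notation invG := (invG e1 genz oz GH).
Local Notation bbfix := (bbfix e1 genz oz GH).
Local Notation unitG := (unitG e1 genz oz GH).
Local Notation is1 := (is1 e1 genz oz GH).
Local Notation eqG := (eqG e1 genz oz GH).
Local Notation bb1 := (bb1 e1 oz).
Local Notation aa1 := (aa1 e1 oz).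

Theorem main : (#|'Z(G)%g| * #|[~: G, G]%g|)%N = (2 ^ e)%N.
Proof.
have trG' : [transitive G, on [set: gT] | 'P] := trG.
have [s sS s1] : exists2 s, s \in ('C_G[1 | 'P])%g & s != 1%g.
  apply/trivgPn; move: nrG; by rewrite /hol_regular trG.
have sG : s \in G by move: sS; rewrite inE => /andP [].
have s1fix : s 1%g = 1%g by move: sS; rewrite inE => /andP [_ /astab1P].
have bs : bb s = 0.
  by apply: (ez_inj e1 oz); rewrite -(bbfix sG) s1fix ez0.
have [h0 h0G h0z] : exists2 h0, h0 \in G & h0 1%g = z.
  have : z \in orbit 'P G 1%g by rewrite (atransP trG') ?inE.
  by case/orbitP => h hG <-; exists h; rewrite ?apermE.
have bh0 : bb h0 = 1 by apply: (ez_inj e1 oz); rewrite -(bbfix h0G) h0z ez1.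
set c := aa h0.
have [w hw] : exists w, c = 1 + 2%:R * w := unit_odd e1 (unitG h0G).
pose ff p := tt p h0.
have ffE p : ff p = (c - 1) * bb p - (aa p - 1) by rewrite /ff /tt bh0 mulr1.
have tE p q : tt p q = ff p * bb q - ff q * bb p.
  by rewrite /tt !ffE; ring.
have aF p : ff p = 0 -> aa p = 1 + (c - 1) * bb p.
  move=> h; have : aa p = 1 + (c - 1) * bb p - ff p by rewrite ffE; ring.
  by rewrite h subr0.
pose H := ('C_G[h0])%G.
have HG g : g \in H -> g \in G /\ ff g = 0.
  by rewrite inE => /andP [gG /cent1P cg]; split => //; apply/(commP gG h0G).
have fs0 : ff s != 0.
  apply/negP => /eqP h; apply/negP: s1; apply/negPn/eqP; apply: is1 => //.
  by rewrite (aF _ h) bs mulr0 addr0.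
have [l [x0 x0X [u uu [le x0E dvX]]]] := minval e1 (imset_f ff sG) fs0.
have dvG g : g \in G -> dvb l (ff g) by move=> gG; apply: dvX; apply: imset_f.
case/imsetP: x0X x0E => gs gsG -> x0E.
have l1 : (0 < l)%N.
  rewrite lt0n; apply/negP => /eqP l0; move: x0E; rewrite l0 expr0 mul1r => x0E.
  have [w' hw'] := unit_odd e1 (unitG gsG).
  have hE : u = 2%:R * (w * bb gs - w') by rewrite -x0E ffE hw hw'; ring.
  have [w'' hw''] := unit_odd e1 uu.
  apply: (not_even1 e1); exists (w * bb gs - w' - w'').
  have : 1 = (1 + 2%:R * w'') - 2%:R * w'' by ring.
  by rewrite -hw'' hE => h1; rewrite {1}h1; ring.
have le' : (l <= e)%N := ltnW le.
have gT_T : group_set [set r in G | (aa r == 1) && dvb l (bb r)].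
  apply/group_setP; split; first by rewrite inE group1 aa1 bb1 eqxx dvb0.
  move=> p q; rewrite !inE => /andP [pG /andP [/eqP ap bp]] /andP [qG /andP [/eqP aq bq]].
  by rewrite groupM // aaM // bbM // ap aq mulr1 eqxx /= mul1r; apply: dvbD.
pose T := Group gT_T.
have GT : [~: G, G]%g \subset T.
  rewrite gen_subG; apply/subsetP => r /imset2P [p q pG qG ->].
  have [br ar] := commR pG qG.
  rewrite inE groupR // ar eqxx br tE /= (mulrC (ff p)) (mulrC (ff q)).
  by apply: dvbD; [apply: dvbMl | apply/dvbN/dvbMl]; apply: dvG.
have cardT : (#|T| <= 2 ^ (e - l))%N.
  rewrite -(card_in_imset (f := bb)); last first.
    move=> p q; rewrite !inE => /andP [pG /andP [/eqP ap _]] /andP [qG /andP [/eqP aq _]] h.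
    by apply: eqG; rewrite // ap aq.
  apply: leq_trans (card_dvb e1 le'); apply: subset_leq_card.
  by apply/subsetP => x /imsetP [p]; rewrite !inE => /and3P [_ _ ?] ->.
have GTle : (#|[~: G, G]%g| <= 2 ^ (e - l))%N := leq_trans (subset_leq_card GT) cardT.
have rG : ([~ gs, h0] \in G)%g by rewrite groupR.
have [br ar] := commR gsG h0G.
have x0E' : tt gs h0 = 2%:R ^+ l * u := x0E.
have powr k : bb ([~ gs, h0] ^+ k)%g = 2%:R ^+ l * u * k%:R /\ aa ([~ gs, h0] ^+ k)%g = 1.
  by have [pb pa] := powG k rG; rewrite pb pa ar br geo1 expr1n x0E'.
have ordr : #[[~ gs, h0]]%g = (2 ^ (e - l))%N.
  apply: order2; first by rewrite subn_gt0.
    have [pb pa] := powr (2 ^ (e - l))%N; apply: is1 => //; first by rewrite groupX.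
    by rewrite pb natrX mulrAC -exprD (subnKC le') (two_e0 e1) mul0r.
  apply/eqP => h; have := congr1 bb h; rewrite bb1 (proj1 (powr _)) natrX mulrAC -exprD.
  have -> : (l + (e - l).-1 = e.-1)%N.
    by rewrite -subn1 addnBA ?subn_gt0 // (subnKC le') subn1.
  apply/eqP; apply: (R1 e1 _ uu); by rewrite ltn_predL.
have GTge : (2 ^ (e - l) <= #|[~: G, G]%g|)%N.
  by rewrite -ordr; apply: subset_leq_card; rewrite cycle_subG; apply: mem_commg.
have Zprop g : g \in 'Z(G)%g -> [/\ g \in G, ff g = 0 & dvb (e - l) (bb g)].
  case/centerP => gG cg.
  have f0 : ff g = 0 by apply/(commP gG h0G); apply: cg.
  split => //.
  have : tt g gs = 0 by apply/(commP gG gsG); apply: cg.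
  rewrite tE f0 mul0r sub0r x0E => /eqP; rewrite oppr_eq0 -mulrA => /eqP h.
  have := ann e1 le' h; move/(dvbMl (u^-1)); by rewrite mulrA mulVr // mul1r.
have Zle : (#|'Z(G)%g| <= 2 ^ l)%N.
  rewrite -(card_in_imset (f := bb)); last first.
    move=> p q /Zprop [pG fp _] /Zprop [qG fq _] h; apply: eqG => //.
    by rewrite (aF _ fp) (aF _ fq) h.
  have := card_dvb e1 (leq_subr l e); rewrite (subKn le') => /(leq_trans _); apply.
  apply: subset_leq_card; apply/subsetP => x /imsetP [p /Zprop [_ _ ?] ->].
  by rewrite inE.
have cardG : #|G| = (2 ^ e * #|('C_G[1 | 'P])%g|)%N.
  have := card_orbit_in_stab 'P 1%g (subsetT G).
  rewrite (atransP trG') ?inE // => <-; congr (_ * _)%N.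
  by rewrite -oz /order -genz.
have S2 : (1 < #|('C_G[1 | 'P])%g|)%N by rewrite cardG_gt1; apply/trivgPn; exists s.
have clle : (#|(h0 ^: G)%g| <= 2 ^ (e - l))%N.
  have cE g : g \in G -> 1 - bb (h0 ^ g)%g = ff g.
    by move=> gG; rewrite (proj1 (conjG h0G gG)) ffE bh0; ring.
  rewrite -(card_in_imset (f := fun k => 1 - bb k)); last first.
    move=> k1 k2 /imsetP [g1 g1G ->] /imsetP [g2 g2G ->] /= h.
    apply: eqG; rewrite ?groupJ //; first by move/addrI/oppr_inj: h.
    by rewrite (proj2 (conjG h0G g1G)) (proj2 (conjG h0G g2G)).
  apply: leq_trans (card_dvb e1 le'); apply: subset_leq_card.
  apply/subsetP => x /imsetP [k /imsetP [g gG ->] ->].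
  by rewrite inE cE //; apply: dvG.
have Hge : (2 ^ l.+1 <= #|H|)%N.
  have hh : (#|H| * #|(h0 ^: G)%g| = #|G|)%N by rewrite -index_cent1 Lagrange ?subsetIl.
  have e_eq : (2 ^ e * 2 = 2 ^ l.+1 * 2 ^ (e - l))%N by rewrite -expnSr -expnD addSn (subnKC le').
  have : (2 ^ e * 2 <= #|H| * 2 ^ (e - l))%N.
    apply: leq_trans (leq_mul (leqnn _) clle); rewrite hh cardG leq_mul2l S2 orbT //.
  by rewrite e_eq leq_pmul2r ?expn_gt0.
have h0H : h0 \in H by rewrite inE h0G cent1id.
have injH : {in H &, injective bb}.
  move=> p q /HG [pG fp] /HG [qG fq] h; apply: eqG => //.
  by rewrite (aF _ fp) (aF _ fq) h.
have [g gH /andP [ev ndv]] : exists2 g, g \in H & dvb 1 (bb g) && ~~ dvb (e - l).+1 (bb g).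
  case: (boolP [exists g in H, dvb 1 (bb g) && ~~ dvb (e - l).+1 (bb g)]).
    by move/exists_inP.
  move=> hne; exfalso.
  have hne' g : g \in H -> dvb 1 (bb g) -> dvb (e - l).+1 (bb g).
    move=> gH d1; case: (boolP (dvb (e - l).+1 (bb g))) => // nd.
    by case/negP: hne; apply/exists_inP; exists g; [done | rewrite d1].
  pose B := [set g | dvb 1 (bb g)].
  have Evle : (#|H :&: B| <= 2 ^ l.-1)%N.
    rewrite -(card_in_imset (f := bb)); last by move=> p q /setIP [pH _] /setIP [qH _]; apply: injH.
    have kle : ((e - l).+1 <= e)%N by rewrite ltn_subrL l1 e1.
    have := card_dvb e1 kle; rewrite subnS (subKn le') => /(leq_trans _); apply.
    apply: subset_leq_card; apply/subsetP => x /imsetP [p /setIP [pH]].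
    by rewrite inE => /(hne' _ pH) ? ->; rewrite inE.
  have Odle : (#|H :\: B| <= #|H :&: B|)%N.
    rewrite -(card_in_imset (f := mulg h0^-1%g)); last by move=> p q _ _; apply: mulgI.
    apply: subset_leq_card; apply/subsetP => x /imsetP [q /setDP [qH]].
    rewrite inE => nq ->; have qG := proj1 (HG _ qH).
    rewrite inE groupM ?groupV //= inE.
    have [[y hy]|[y1 hy1]] := parity (bb q).
      by case/negP: nq; apply/dvbP; exists y; rewrite expr1.
    have [y2 hy2] := unit_odd e1 (unitG qG).
    have [y3 hy3] := unit_odd e1 (unitG (groupVr h0G)).
    apply/dvbP; exists (y1 - y2 - y3 - 2%:R * y2 * y3).
    rewrite (bbM (groupVr h0G) qG) (invG h0G) bh0 hy1 hy2 hy3 expr1; ring.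
  have : (#|H :&: B| + #|H :\: B| <= 2 ^ l.-1 + 2 ^ l.-1)%N.
    by rewrite leq_add // (leq_trans Odle).
  rewrite cardsID => Hle; have := leq_trans Hge Hle.
  by rewrite addnn -mul2n -expnS prednK // leqNgt ltn_exp2l // ltnSn.
have [gG fg0] := HG _ gH.
have ag := aF _ fg0.
have [y gy] : exists y, bb g = 2%:R * y by move/dvbP: ev => [y ->]; exists y; rewrite expr1.
have bg0 : bb g != 0 by apply: contra ndv => /eqP ->; exact: dvb0.
have [sv [v vu [sve bgE]]] := decomp e1 bg0.
have sle : (sv <= e - l)%N.
  rewrite leqNgt; apply: contra ndv => lt; apply: (dvb_le lt); apply/dvbP; exists v.
  by rewrite bgE.
have [t ht] : exists t, aa g = 1 + 2%:R ^+ 2 * t.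
  by exists (w * y); rewrite ag gy hw; ring.
have pw j : exists2 u', u' \is a GRing.unit & bb (g ^+ (2 ^ j))%g = 2%:R ^+ (sv + j) * u'.
  have [u' u'u hu'] := geo2 e1 ht j; exists (v * u'); first by rewrite unitrM vu u'u.
  by rewrite (proj1 (powG _ gG)) bgE hu' exprD; ring.
pose g' := (g ^+ (2 ^ (e - l - sv)))%g.
have g'H : g' \in H by rewrite groupX.
have g'Z : g' \in 'Z(G)%g.
  have [g'G fg'] := HG _ g'H.
  apply/centerP; split => // h hG; apply/(commP g'G hG).
  rewrite tE fg' mul0r sub0r.
  have [u' _ hu'] := pw (e - l - sv)%N.
  rewrite /g' hu' (subnKC sle); have /dvbP [yh ->] := dvG h hG.
  have -> : 2%:R ^+ l * yh * (2%:R ^+ (e - l) * u') = 2%:R ^+ (l + (e - l)) * (yh * u').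
    by rewrite exprD; ring.
  by rewrite (subnKC le') (two_e0 e1) mul0r oppr0.
have ordg' : #[g']%g = (2 ^ l)%N.
  apply: order2 => //.
    rewrite /g' -expgM -expnD.
    rewrite (A1 sle le').
    have [u' _ hu'] := pw (e - sv)%N.
    have hb : bb (g ^+ (2 ^ (e - sv)))%g = 0.
      by rewrite hu' (subnKC (ltnW sve)) (two_e0 e1) mul0r.
    have gkH : (g ^+ (2 ^ (e - sv)))%g \in H by rewrite groupX.
    apply: (is1 (proj1 (HG _ gkH)) hb).
    by rewrite (aF _ (proj2 (HG _ gkH))) hb mulr0 addr0.
  rewrite /g' -expgM -expnD.
  rewrite (A2 sle l1 le').
  have [u' u'u hu'] := pw (e.-1 - sv)%N.
  apply/eqP => h; have := congr1 bb h; rewrite bb1 hu' (subnKC (A3 sle l1 le')).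
  apply/eqP; apply: (R1 e1 _ u'u); by rewrite ltn_predL.
have Zge : (2 ^ l <= #|'Z(G)%g|)%N.
  by rewrite -ordg'; apply: subset_leq_card; rewrite cycle_subG.
have -> : #|'Z(G)%g| = (2 ^ l)%N by apply/eqP; rewrite eqn_leq Zle Zge.
have -> : #|[~: G, G]%g| = (2 ^ (e - l))%N by apply/eqP; rewrite eqn_leq GTle GTge.
by rewrite -expnD (subnKC le').
Qed.
End Thm.


Local Open Scope group_scope.

Theorem lemma5p6 (e : nat) (gT : finGroupType) (G : {group {perm gT}}) :
  (2 <= e)%N -> cyclic [set: gT] -> #|gT| = (2 ^ e)%N ->
  G \subset holomorph gT -> hol_transitive G -> ~~ hol_regular G ->
  (#|'Z(G)| * #|[~: G, G]|)%N = (2 ^ e)%N.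
Proof.
move=> e2 /cyclicP [z genz] cardT GH trG nrG.
have e1 : (0 < e)%N by apply: leq_trans e2.
have oz : #[z] = (2 ^ e)%N by rewrite /order -genz cardsT.
exact: (main e1 genz oz GH trG nrG).
Qed.
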